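(* Let $\alpha\ge1$, let $B\le B_a$ be positive integers, let $\ell,I$ be integers with $0\le\ell\le B_a$ and $I\ge\ell$, and let $(w_k)_{k\le I}$ be reals with $w_k=0$ for $k\le0$ and $0\le w_1\le\cdots\le w_I$. With $\phi_i,\psi_i,\Omega$ as in the context, let $\Psi:=\sum_{i=I-\ell+1}^{I}\psi_i$ and $$\tau:=1+\frac{1}{E^{\alpha}-1}\cdot\frac{1}{\alpha_B}\left(E^{\alpha}-\frac{E^{\alpha}-1}{\alpha_{B_a}}\right).$$ Then $$\sum_{i=I-B_a+1}^{I-\ell}\phi_i w_i+\sum_{i=I-\ell+1}^{I}\psi_i w_i+w_{I-B_a}\,\Omega\ \le\ M\sum_{i=I-B_a+1}^{I}w_i,$$ where $M:=\max\{\tau,\Psi/\ell\}$ if $\ell\ge1$ and $M:=\tau$ if $\ell=0$.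
   Context: Notation: $E:=(1+1/B_a)^{B_a}$, $c:=\frac{E^{\alpha/B_a}-1}{E^{\alpha}-1}$, $e_B:=(1+1/B)^B$, $\alpha_B:=B(e_B^{\alpha/B}-1)$, $\alpha_{B_a}:=B_a(E^{\alpha/B_a}-1)$. The coefficients are $\phi_i:=(B_a-\ell)\,c\,E^{\alpha(I-i)/B_a}+\frac{1}{\alpha_B}\cdot\frac{E^{\alpha}-E^{\alpha(I-\ell-i)/B_a}}{E^{\alpha}-1}$, $\psi_i:=1+(B_a-\ell)\,c\,E^{\alpha(I-i)/B_a}$, and $\Omega:=\frac{1}{\alpha_B}\cdot\frac{1}{E^{\alpha}-1}\left(\ell E^{\alpha}-\frac{E^{\alpha}-E^{\alpha(B_a-\ell)/B_a}}{E^{\alpha/B_a}-1}\right)$. *)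

(* Defs.v *)
From Stdlib Require Import Reals ZArith List.
Open Scope R_scope.

(* sumZ a b f = \sum_{i=a}^{b} f i over integers (empty, = 0, if b < a). *)
Definition sumZ (a b : Z) (f : Z -> R) : R :=
  fold_right Rplus 0
    (map (fun j : nat => f (a + Z.of_nat j)%Z) (seq 0 (Z.to_nat (b - a + 1)))).

Definition eB (B : nat) : R := (1 + 1 / INR B) ^ B.
Definition EE (Ba : nat) : R := eB Ba.

Definition alphaB (alpha : R) (B : nat) : R :=
  INR B * (Rpower (eB B) (alpha / INR B) - 1).

Definition cc (alpha : R) (Ba : nat) : R :=
  (Rpower (EE Ba) (alpha / INR Ba) - 1) / (Rpower (EE Ba) alpha - 1).

Definition phi (alpha : R) (B Ba l : nat) (I i : Z) : R :=
  (INR Ba - INR l) * cc alpha Ba * Rpower (EE Ba) (alpha * IZR (I - i) / INR Ba)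
  + (1 / alphaB alpha B) *
    ((Rpower (EE Ba) alpha
      - Rpower (EE Ba) (alpha * IZR (I - Z.of_nat l - i) / INR Ba))
     / (Rpower (EE Ba) alpha - 1)).

Definition psi (alpha : R) (Ba l : nat) (I i : Z) : R :=
  1 + (INR Ba - INR l) * cc alpha Ba * Rpower (EE Ba) (alpha * IZR (I - i) / INR Ba).

Definition Omega (alpha : R) (B Ba l : nat) : R :=
  (1 / alphaB alpha B) * (1 / (Rpower (EE Ba) alpha - 1)) *
  (INR l * Rpower (EE Ba) alpha
   - (Rpower (EE Ba) alpha - Rpower (EE Ba) (alpha * (INR Ba - INR l) / INR Ba))
     / (Rpower (EE Ba) (alpha / INR Ba) - 1)).

Definition tau (alpha : R) (B Ba : nat) : R :=
  1 + (1 / (Rpower (EE Ba) alpha - 1)) * (1 / alphaB alpha B) *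
      (Rpower (EE Ba) alpha - (Rpower (EE Ba) alpha - 1) / alphaB alpha Ba).

Definition Psi (alpha : R) (Ba l : nat) (I : Z) : R :=
  sumZ (I - Z.of_nat l + 1) I (psi alpha Ba l I).

Definition Mconst (alpha : R) (B Ba l : nat) (I : Z) : R :=
  match l with
  | O => tau alpha B Ba
  | _ => Rmax (tau alpha B Ba) (Psi alpha Ba l I / INR l)
  end.

(* Main.v *)
Require Import Defs.
From Stdlib Require Import Reals ZArith List Lra Lia Psatz.
Open Scope R_scope.

Fixpoint sn (f : nat -> R) (n : nat) : R :=
  match n with O => 0 | S k => sn f k + f k end.

Lemma sn_ext f g n : (forall j, (j < n)%nat -> f j = g j) -> sn f n = sn g n.
Proof. induction n; intros H; simpl; auto. rewrite IHn, H; auto. Qed.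

Lemma sn_front h n : sn h (S n) = h O + sn (fun j => h (S j)) n.
Proof. induction n; simpl in *. lra. rewrite IHn. lra. Qed.

Lemma sn_split h p k : sn h (p + k) = sn h p + sn (fun j => h (p + j)%nat) k.
Proof. induction k; simpl. rewrite Nat.add_0_r; lra. rewrite Nat.add_succ_r; simpl. rewrite IHk. lra. Qed.

Lemma sn_lin f x y n : sn (fun j => x * f j + y) n = x * sn f n + y * INR n.
Proof. induction n; simpl sn. simpl; lra. rewrite IHn, S_INR. lra. Qed.

Lemma sn_le_bound h C n : (forall j, (j < n)%nat -> h j <= C) -> sn h n <= C * INR n.
Proof. induction n; intros H; simpl sn. simpl; lra. rewrite S_INR.
  assert (h n <= C) by (apply H; lia). assert (sn h n <= C * INR n) by (apply IHn; intros; apply H; lia). lra. Qed.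

Lemma mono_le (h : nat -> R) : (forall j, h j <= h (S j)) -> forall i j, (i <= j)%nat -> h i <= h j.
Proof. intros H i j Hij. induction Hij. lra. specialize (H m). lra. Qed.

Lemma sn_avg h n L : (forall j, h j <= h (S j)) -> (n <= L)%nat -> INR L * sn h n <= INR n * sn h L.
Proof. intros Hm HL. replace L with (n + (L - n))%nat by lia. generalize (L - n)%nat. clear L HL.
  induction n0. rewrite Nat.add_0_r; lra.
  rewrite Nat.add_succ_r. simpl sn. rewrite S_INR.
  assert (sn h n <= h (n + n0)%nat * INR n). { apply sn_le_bound. intros; apply mono_le; auto; lia. }
  nra. Qed.

Lemma geo q n : (q - 1) * sn (pow q) n = q ^ n - 1.
Proof. induction n; simpl sn. simpl; lra. simpl pow. nra. Qed.

Lemma fold_sn g s n : fold_right Rplus 0 (map g (seq s n)) = sn (fun j => g (s + j)%nat) n.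
Proof. revert s; induction n; intros s. auto. simpl seq; simpl map; simpl fold_right. rewrite sn_front. rewrite IHn.
  rewrite Nat.add_0_r. f_equal. apply sn_ext. intros; f_equal; lia. Qed.

Lemma sn_rev h n : sn h n = sn (fun j => h (n - 1 - j)%nat) n.
Proof. induction n. auto. rewrite (sn_front (fun j => h (S n - 1 - j)%nat)). simpl sn at 1. rewrite IHn.
  replace (S n - 1 - 0)%nat with n by lia. rewrite Rplus_comm. f_equal. apply sn_ext. intros; f_equal; lia. Qed.

Lemma abel (a v : nat -> R) (M O : R) m :
  (forall j, v (S j) <= v j) -> 0 <= v m ->
  (forall n, (n <= m)%nat -> sn a n <= M * INR n) -> sn a m + O <= M * INR m ->
  sn (fun j => a j * v j) m + O * v m <= M * sn v m.
Proof. intros Hv Hv0 HD Hf.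
  assert (C: forall n, (n <= m)%nat -> sn (fun j => a j * v j) n - M * sn v n <= (sn a n - M * INR n) * v n).
  { induction n; intros Hn. simpl; lra. simpl sn. rewrite S_INR.
    specialize (IHn ltac:(lia)). specialize (HD (S n) Hn). simpl sn in HD. rewrite S_INR in HD.
    specialize (Hv n). nra. }
  specialize (C m (le_n _)). nra. Qed.

Lemma pow_gt1 q n : 1 < q -> 1 <= q ^ n.
Proof. intros; induction n; simpl; nra. Qed.

Lemma pow_mono q i j : 1 < q -> (i <= j)%nat -> q ^ i <= q ^ j.
Proof. intros Hq H. induction H. lra. simpl. assert (1 <= q^m) by (apply pow_gt1; auto). nra. Qed.

Lemma coef (m l : nat) (q Kb M : R) (a : nat -> R) :
  (1 <= m)%nat -> (l <= m)%nat -> 1 < q -> 0 < Kb <= 1 -> 1 <= INR m * (q - 1) ->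
  (forall j, (j < l)%nat -> a j = 1 + (INR m - INR l) * ((q - 1) / (q ^ m - 1)) * q ^ j) ->
  (forall k, (l + k < m)%nat -> a (l + k)%nat =
      (INR m - INR l) * ((q - 1) / (q ^ m - 1)) * q ^ (l + k) + Kb * ((q ^ m - q ^ k) / (q ^ m - 1))) ->
  1 + (1 / (q ^ m - 1)) * Kb * (q ^ m - (q ^ m - 1) / (INR m * (q - 1))) <= M ->
  ((0 < l)%nat -> sn (fun j => 1 + (INR m - INR l) * ((q - 1) / (q ^ m - 1)) * q ^ j) l / INR l <= M) ->
  (forall n, (n <= m)%nat -> sn a n <= M * INR n) /\
  sn a m + Kb * (1 / (q ^ m - 1)) * (INR l * q ^ m - (q ^ m - q ^ (m - l)) / (q - 1)) <= M * INR m.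
Proof.
  intros Hm Hl Hq HK Ham Ha1 Ha2 Htau Hpsi.
  set (r := q ^ m) in *.
  assert (Hr : 1 < r) by (apply Rlt_pow_R1; auto; lia).
  set (A := (INR m - INR l) * ((q - 1) / (r - 1))) in *.
  assert (HlR : INR l <= INR m) by (apply le_INR; auto).
  assert (HA : 0 <= A). { unfold A. apply Rmult_le_pos. lra. apply Rlt_le, Rdiv_lt_0_compat; lra. }
  set (K := Kb / (r - 1)).
  set (X := A * q ^ l - K).
  assert (Ha2' : forall k, (l + k < m)%nat -> a (l + k)%nat = q ^ k * X + K * r).
  { intros k Hk. rewrite Ha2 by auto. unfold X, K. rewrite pow_add. field. lra. }
  set (p1 := fun j => 1 + A * q ^ j).
  assert (Hp1 : forall n, (n <= l)%nat -> sn a n = sn p1 n).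
  { intros n Hn. apply sn_ext. intros; unfold p1; apply Ha1; lia. }
  assert (Hp1m : forall j, p1 j <= p1 (S j)).
  { intros j. unfold p1. rewrite <- tech_pow_Rmult. assert (1 <= q ^ j) by (apply pow_gt1; auto). assert (0 <= A * q ^ j * (q - 1)) by (apply Rmult_le_pos; [apply Rmult_le_pos|]; lra). lra. }
  assert (P1 : forall n, (n <= l)%nat -> sn a n <= M * INR n).
  { intros n Hn. rewrite Hp1 by auto. destruct l as [|l'].
    - replace n with O by lia. simpl. lra.
    - specialize (Hpsi ltac:(lia)). pose proof (sn_avg p1 n (S l') Hp1m Hn).
      assert (0 < INR (S l')) by (apply lt_0_INR; lia).
      assert (sn p1 (S l') <= M * INR (S l')).
      { unfold p1. apply (Rmult_le_compat_r (INR (S l'))) in Hpsi; [|lra].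
        unfold Rdiv in Hpsi. rewrite Rmult_assoc, Rinv_l in Hpsi by lra. lra. }
      assert (0 <= INR n) by apply pos_INR. nra. }
  set (G := fun n => sn (pow q) n).
  assert (HG : forall n, G n = (q ^ n - 1) / (q - 1)).
  { intros n. unfold G. pose proof (geo q n). field_simplify_eq. lra. lra. }
  set (p2 := fun k => q ^ k * X + K * r).
  assert (Hsp2 : forall n, sn p2 n = X * G n + K * r * INR n).
  { intros n. unfold p2, G. rewrite <- sn_lin. apply sn_ext. intros; lra. }
  assert (Hsp1 : forall n, sn p1 n = A * G n + INR n).
  { intros n. unfold p1, G. rewrite <- (Rmult_1_l (INR n)), <- sn_lin. apply sn_ext. intros; lra. }
  assert (Hsplit : forall k, (l + k <= m)%nat -> sn a (l + k) = sn p1 l + sn p2 k).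
  { intros k Hk. rewrite sn_split, Hp1 by lia. f_equal. apply sn_ext. intros; unfold p2; apply Ha2'; lia. }
  set (Om := Kb * (1 / (r - 1)) * (INR l * r - (r - q ^ (m - l)) / (q - 1))).
  assert (Htot : sn a m + Om = (1 + (1 / (r - 1)) * Kb * (r - (r - 1) / (INR m * (q - 1)))) * INR m).
  { replace m with (l + (m - l))%nat at 1 by lia. rewrite Hsplit by lia.
    rewrite Hsp1, Hsp2, !HG. unfold Om, X, K, A, r.
    replace (INR m - INR l) with (INR (m - l)) by (rewrite minus_INR; auto).
    replace (q ^ m) with (q ^ l * q ^ (m - l)) by (rewrite <- pow_add; f_equal; lia).
    assert (INR m <> 0) by (apply not_0_INR; lia).
    assert (q ^ l * q ^ (m - l) - 1 <> 0).
    { rewrite <- pow_add. replace (l + (m - l))%nat with m by lia. fold r. lra. }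
    replace (INR m) with (INR l + INR (m - l)) by (rewrite minus_INR; auto; ring).
    field. repeat split; try lra. replace (INR l + INR (m - l)) with (INR m) by (rewrite minus_INR; auto; ring). auto. }
  assert (HOm : 0 <= Om).
  { unfold Om. apply Rmult_le_pos. apply Rmult_le_pos. lra. apply Rlt_le, Rdiv_lt_0_compat; lra.
    unfold r. replace (q ^ m - q ^ (m - l)) with (q ^ (m - l) * (q ^ l - 1))
      by (rewrite Rmult_minus_distr_l, <- pow_add; replace (m - l + l)%nat with m by lia; ring).
    assert (G l <= q ^ l * INR l). { apply sn_le_bound. intros; apply pow_mono; auto; lia. }
    rewrite HG in H. assert (1 <= q ^ (m - l)) by (apply pow_gt1; auto).
    replace (q ^ m) with (q ^ (m - l) * q ^ l) by (rewrite <- pow_add; f_equal; lia).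
    unfold Rdiv in *. rewrite Rmult_assoc. nra. }
  assert (HtM : (1 + (1 / (r - 1)) * Kb * (r - (r - 1) / (INR m * (q - 1)))) * INR m <= M * INR m)
    by (apply Rmult_le_compat_r; [apply pos_INR|auto]).
  assert (HD : sn a m <= M * INR m) by lra.
  split; [|lra].
  intros n Hn. destruct (le_lt_dec n l) as [Hnl|Hnl]. auto.
  replace n with (l + (n - l))%nat by lia. rewrite Hsplit by lia.
  assert (HDl := P1 l (le_n _)). rewrite Hp1 in HDl by auto.
  rewrite plus_INR.
  destruct (Rle_lt_dec 0 X) as [HX|HX].
  - set (h := fun k => p2 k - M).
    assert (Hh : forall j, h j <= h (S j)).
    { intros j; unfold h, p2. rewrite <- tech_pow_Rmult. assert (1 <= q ^ j) by (apply pow_gt1; auto). assert (0 <= X * q ^ j * (q - 1)) by (apply Rmult_le_pos; [apply Rmult_le_pos|]; lra). lra. }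
    assert (Hsh : forall k, sn h k = sn p2 k - M * INR k).
    { intros k. unfold h. replace (sn (fun k0 => p2 k0 - M) k) with (sn (fun k0 => 1 * p2 k0 + - M) k) by (apply sn_ext; intros; ring).
      rewrite sn_lin. ring. }
    pose proof (sn_avg h (n - l) (m - l) Hh ltac:(lia)).
    rewrite !Hsh in H.
    replace m with (l + (m - l))%nat in HD by lia. rewrite Hsplit in HD by lia.
    rewrite plus_INR in HD.
    assert (0 < INR (m - l)) by (apply lt_0_INR; lia).
    assert (INR (n - l) <= INR (m - l)) by (apply le_INR; lia).
    assert (0 <= INR (n - l)) by apply pos_INR.
    nra.
  - assert (sn p2 (n - l) <= M * INR (n - l)).
    { apply sn_le_bound. intros j _. unfold p2.
      assert (1 <= q ^ j) by (apply pow_gt1; auto).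
      assert (K * r <= M).
      { apply Rle_trans with (2 := Htau). fold r.
        assert (Kb / (INR m * (q - 1)) <= 1).
        { assert (Hi: / (INR m * (q - 1)) <= 1) by (rewrite <- Rinv_1; apply Rinv_le_contravar; lra). assert (0 < / (INR m * (q - 1))) by (apply Rinv_0_lt_compat; lra). unfold Rdiv; nra. }
        unfold K. replace (1 / (r - 1) * Kb * (r - (r - 1) / (INR m * (q - 1))))
          with (Kb / (r - 1) * r - Kb / (INR m * (q - 1))). lra. assert (INR m <> 0) by (apply not_0_INR; lia). field. repeat split; lra. }
      nra. }
    lra.
Qed.

Lemma sumZ_rev a b f n : (b - a + 1 = Z.of_nat n)%Z ->
  sumZ a b f = sn (fun j => f (b - Z.of_nat j)%Z) n.
Proof. intros H. unfold sumZ. rewrite H, Nat2Z.id, fold_sn, sn_rev.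
  apply sn_ext. intros j Hj. f_equal. lia. Qed.

Lemma Rpower_pos x y : 0 < Rpower x y.
Proof. unfold Rpower. apply exp_pos. Qed.

Lemma rp_pow E al (j m : nat) : (m <> 0)%nat ->
  Rpower E (al * INR j / INR m) = (Rpower E (al / INR m)) ^ j.
Proof. intros Hm. rewrite <- Rpower_pow by apply Rpower_pos. rewrite Rpower_mult.
  f_equal. assert (INR m <> 0) by (apply not_0_INR; auto). field; auto. Qed.

Lemma alphaB_ge1 al B : 1 <= al -> (0 < B)%nat -> 1 <= alphaB al B.
Proof. intros Ha HB. unfold alphaB.
  assert (HBr : 0 < INR B) by (apply lt_0_INR; auto).
  assert (Hx : 0 < 1 + 1 / INR B) by (assert (0 < 1 / INR B) by (apply Rdiv_lt_0_compat; lra); lra).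
  assert (He : eB B = Rpower (1 + 1 / INR B) (INR B)) by (unfold eB; rewrite Rpower_pow; auto).
  assert (Hge : 1 + 1 / INR B <= Rpower (eB B) (al / INR B)).
  { rewrite He, Rpower_mult.
    rewrite <- (Rpower_1 (1 + 1 / INR B)) at 1 by auto.
    apply Rle_Rpower.
    assert (0 < 1 / INR B) by (apply Rdiv_lt_0_compat; lra). lra.
    replace (INR B * (al / INR B)) with al by (field; lra). lra. }
  apply Rle_trans with (INR B * (1 + 1 / INR B - 1)).
  right; field; lra. apply Rmult_le_compat_l; lra. Qed.

Lemma w_nonneg (w : Z -> R) I :
  (forall k : Z, (k <= 0)%Z -> w k = 0) ->
  (forall k : Z, (0 <= k)%Z -> (k < I)%Z -> w k <= w (k + 1)%Z) ->
  forall k, (k <= I)%Z -> 0 <= w k.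
Proof. intros H0 Hm.
  assert (A : forall n, (Z.of_nat n <= I)%Z -> 0 <= w (Z.of_nat n)).
  { induction n; intros Hn. rewrite H0 by lia; lra.
    rewrite Nat2Z.inj_succ. unfold Z.succ. specialize (Hm (Z.of_nat n) ltac:(lia) ltac:(lia)).
    specialize (IHn ltac:(lia)). lra. }
  intros k Hk. destruct (Z.le_gt_cases k 0). rewrite H0 by auto; lra.
  replace k with (Z.of_nat (Z.to_nat k)) by lia. apply A. lia. Qed.

Theorem lemmaA8 (alpha : R) (B Ba l : nat) (I : Z) (w : Z -> R) :
  1 <= alpha ->
  (0 < B)%nat -> (B <= Ba)%nat ->
  (l <= Ba)%nat -> (Z.of_nat l <= I)%Z ->
  (forall k : Z, (k <= 0)%Z -> w k = 0) ->
  (forall k : Z, (0 <= k)%Z -> (k < I)%Z -> w k <= w (k + 1)%Z) ->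
  sumZ (I - Z.of_nat Ba + 1) (I - Z.of_nat l) (fun i => phi alpha B Ba l I i * w i)
  + sumZ (I - Z.of_nat l + 1) I (fun i => psi alpha Ba l I i * w i)
  + w (I - Z.of_nat Ba)%Z * Omega alpha B Ba l
  <= Mconst alpha B Ba l I * sumZ (I - Z.of_nat Ba + 1) I w.
Proof.
  intros Hal HB HBBa HlBa HlI Hw0 Hwm.
  assert (HBa : (Ba <> 0)%nat) by lia.
  assert (HBaR : 0 < INR Ba) by (apply lt_0_INR; lia).
  assert (HE : 1 < EE Ba).
  { unfold EE, eB. apply Rlt_pow_R1; [|lia]. assert (0 < 1 / INR Ba) by (apply Rdiv_lt_0_compat; lra). lra. }
  set (q := Rpower (EE Ba) (alpha / INR Ba)).
  assert (Hq : 1 < q).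
  { unfold q. rewrite <- (Rpower_O (EE Ba)) by lra. apply Rpower_lt; auto.
    apply Rdiv_lt_0_compat; lra. }
  assert (Hr : Rpower (EE Ba) alpha = q ^ Ba).
  { unfold q. rewrite <- (rp_pow (EE Ba) alpha Ba Ba HBa). f_equal. field. lra. }
  assert (HaB := alphaB_ge1 alpha B Hal HB).
  assert (HaBa : 1 <= INR Ba * (q - 1)) by (apply (alphaB_ge1 alpha Ba Hal); lia).
  set (Kb := 1 / alphaB alpha B).
  assert (HKb : 0 < Kb <= 1).
  { unfold Kb. split. apply Rdiv_lt_0_compat; lra.
    unfold Rdiv. rewrite Rmult_1_l. rewrite <- Rinv_1. apply Rinv_le_contravar; lra. }
  set (v := fun j : nat => w (I - Z.of_nat j)%Z).
  set (a := fun j : nat => if (j <? l)%nat then psi alpha Ba l I (I - Z.of_nat j)%Z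
                           else phi alpha B Ba l I (I - Z.of_nat j)%Z).
  set (c := (INR Ba - INR l) * ((q - 1) / (q ^ Ba - 1))).
  assert (Hpsi : forall j : nat, psi alpha Ba l I (I - Z.of_nat j)%Z = 1 + c * q ^ j).
  { intros j. unfold psi, cc, c. fold q. rewrite Hr.
    replace (IZR (I - (I - Z.of_nat j))) with (INR j) by (rewrite INR_IZR_INZ; f_equal; lia).
    rewrite rp_pow by auto. fold q. ring. }
  assert (Ha1 : forall j, (j < l)%nat -> a j = 1 + c * q ^ j).
  { intros j Hj. unfold a. replace (j <? l)%nat with true by (symmetry; apply Nat.ltb_lt; auto). apply Hpsi. }
  assert (Ha2 : forall k, (l + k < Ba)%nat -> a (l + k)%nat =
      c * q ^ (l + k) + Kb * ((q ^ Ba - q ^ k) / (q ^ Ba - 1))).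
  { intros k Hk. unfold a. replace (l + k <? l)%nat with false by (symmetry; apply Nat.ltb_ge; lia).
    unfold phi, cc, c, Kb. fold q. rewrite Hr.
    replace (IZR (I - (I - Z.of_nat (l + k)))) with (INR (l + k)) by (rewrite INR_IZR_INZ; f_equal; lia).
    replace (IZR (I - Z.of_nat l - (I - Z.of_nat (l + k)))) with (INR k) by (rewrite INR_IZR_INZ; f_equal; lia).
    rewrite !rp_pow by auto. fold q. ring. }
  assert (Htau : tau alpha B Ba = 1 + (1 / (q ^ Ba - 1)) * Kb * (q ^ Ba - (q ^ Ba - 1) / (INR Ba * (q - 1)))).
  { unfold tau, Kb. rewrite Hr. reflexivity. }
  assert (HPsi : Psi alpha Ba l I = sn (fun j => 1 + c * q ^ j) l).
  { unfold Psi. rewrite (sumZ_rev _ _ _ l) by lia. apply sn_ext. intros; apply Hpsi. }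
  assert (HOm : Omega alpha B Ba l = Kb * (1 / (q ^ Ba - 1)) * (INR l * q ^ Ba - (q ^ Ba - q ^ (Ba - l)) / (q - 1))).
  { unfold Omega, Kb. fold q. rewrite Hr. rewrite <- minus_INR by auto. rewrite rp_pow by auto. fold q. reflexivity. }
  assert (HM1 : tau alpha B Ba <= Mconst alpha B Ba l I).
  { unfold Mconst. destruct l. lra. apply Rmax_l. }
  assert (HM2 : (0 < l)%nat -> sn (fun j => 1 + c * q ^ j) l / INR l <= Mconst alpha B Ba l I).
  { intros Hl. rewrite <- HPsi. unfold Mconst. destruct l. lia. apply Rmax_r. }
  rewrite Htau in HM1.
  destruct (coef Ba l q Kb (Mconst alpha B Ba l I) a ltac:(lia) HlBa Hq HKb HaBa Ha1 Ha2 HM1 HM2) as [C1 C2].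
  rewrite <- HOm in C2.
  rewrite (sumZ_rev _ _ _ (Ba - l)) by lia.
  rewrite (sumZ_rev _ _ _ l) by lia.
  rewrite (sumZ_rev _ _ w Ba) by lia.
  assert (Hsum : sn (fun j => a j * v j) Ba =
    sn (fun j => phi alpha B Ba l I (I - Z.of_nat l - Z.of_nat j)%Z * w (I - Z.of_nat l - Z.of_nat j)%Z) (Ba - l)
    + sn (fun j => psi alpha Ba l I (I - Z.of_nat j)%Z * w (I - Z.of_nat j)%Z) l).
  { replace Ba with (l + (Ba - l))%nat at 1 by lia. rewrite sn_split. rewrite Rplus_comm. f_equal.
    - apply sn_ext. intros j Hj. unfold a, v. replace (l + j <? l)%nat with false by (symmetry; apply Nat.ltb_ge; lia).
      replace (I - Z.of_nat (l + j))%Z with (I - Z.of_nat l - Z.of_nat j)%Z by lia. reflexivity.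
    - apply sn_ext. intros j Hj. unfold a, v. replace (j <? l)%nat with true by (symmetry; apply Nat.ltb_lt; auto). reflexivity. }
  rewrite <- Hsum.
  replace (sn (fun j => w (I - Z.of_nat j)%Z) Ba) with (sn v Ba) by reflexivity.
  replace (w (I - Z.of_nat Ba)%Z) with (v Ba) by reflexivity.
  rewrite Rmult_comm with (r1 := v Ba).
  apply abel; auto.
  - intros j. unfold v. destruct (Z.le_gt_cases 0 (I - Z.of_nat (S j))%Z).
    + replace (I - Z.of_nat j)%Z with (I - Z.of_nat (S j) + 1)%Z by lia. apply Hwm; lia.
    + rewrite Hw0 by lia. rewrite (Hw0 (I - Z.of_nat j)%Z) by lia. lra.
  - unfold v. apply (w_nonneg w I Hw0 Hwm). lia.
Qed.
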